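(* Let $\mathcal{X}_1,\mathcal{X}_2$ be non-empty sets, let $\mathcal{B}_1\subseteq\mathcal{P}(\mathcal{X}_1)\setminus\{\emptyset\}$ and $\mathcal{B}_2\subseteq\mathcal{P}(\mathcal{X}_2)\setminus\{\emptyset\}$, and for $i\in\{1,2\}$ let $\underline{P}_i$ be a coherent conditional lower prevision on a domain $\mathcal{C}_i\subseteq\mathcal{C}(\mathcal{X}_i)$. Let $\mathcal{C}\subseteq\mathcal{C}(\mathcal{X}_1\times\mathcal{X}_2)$ be an independent domain that contains $\mathcal{C}_1$ and $\mathcal{C}_2$. Then the independent natural extension of $\underline{P}_1$ and $\underline{P}_2$ (on $\mathcal{C}$) exists and equals the restriction to $\mathcal{C}$ of $\underline{P}_1\otimes\underline{P}_2$, where $(\underline{P}_1\otimes\underline{P}_2)(f\vert B):=\underline{P}_{\mathcal{D}}(f\vert B)$ for all $(f,B)\in\mathcal{C}(\mathcal{X}_1\times\mathcal{X}_2)$, with $\mathcal{D}:=\mathcal{E}(\underline{P}_1)\otimes\mathcal{E}(\underline{P}_2)$.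
   Context: Gambles on a non-empty set $\mathcal{X}$ are bounded real functions; $\mathcal{G}(\mathcal{X})$ is the set of gambles, $\mathcal{G}_{>0}(\mathcal{X})$ the non-negative non-zero gambles, $\mathbb{I}_A$ the indicator of $A$. For $\mathcal{A}\subseteq\mathcal{G}(\mathcal{X})$: $\mathrm{posi}(\mathcal{A}):=\{\sum_{i=1}^n\lambda_if_i\colon n\in\mathbb{N},\lambda_i>0,f_i\in\mathcal{A}\}$, $\mathcal{E}(\mathcal{A}):=\mathrm{posi}(\mathcal{A}\cup\mathcal{G}_{>0}(\mathcal{X}))$. A coherent set of desirable gambles $\mathcal{D}\subseteq\mathcal{G}(\mathcal{X})$ satisfies: (D1) $f\geq0,f\neq0\Rightarrow f\in\mathcal{D}$; (D2) $f\in\mathcal{D},\lambda>0\Rightarrow\lambda f\in\mathcal{D}$; (D3) $f,g\in\mathcal{D}\Rightarrow f+g\in\mathcal{D}$; (D4) $f\leq0\Rightarrow f\notin\mathcal{D}$. $\mathcal{C}(\mathcal{X}):=\mathcal{G}(\mathcal{X})\times(\mathcal{P}(\mathcal{X})\setminus\{\emptyset\})$. A conditional lower prevision on $\mathcal{C}\subseteq\mathcal{C}(\mathcal{X})$ is a map $\underline{P}\colon\mathcal{C}\to\mathbb{R}\cup\{\pm\infty\}$, $(f,B)\mapsto\underline{P}(f\vert B)$. For $\mathcal{D}\subseteq\mathcal{G}(\mathcal{X})$, $\underline{P}_{\mathcal{D}}(f\vert B):=\sup\{\mu\in\mathbb{R}\colon[f-\mu]\mathbb{I}_B\in\mathcal{D}\}$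 for $(f,B)\in\mathcal{C}(\mathcal{X})$. $\underline{P}$ on $\mathcal{C}$ is coherent if there is a coherent set of desirable gambles $\mathcal{D}$ with $\underline{P}=\underline{P}_{\mathcal{D}}$ on $\mathcal{C}$. For coherent $\underline{P}$ on $\mathcal{C}$, $\mathcal{A}_{\underline{P}}:=\{[f-\mu]\mathbb{I}_B\colon(f,B)\in\mathcal{C},\mu<\underline{P}(f\vert B)\}$ and $\mathcal{E}(\underline{P}):=\mathcal{E}(\mathcal{A}_{\underline{P}})$. Two-variable setting: gambles/events on $\mathcal{X}_i$ are identified with their cylindrical extensions to $\mathcal{X}_1\times\mathcal{X}_2$ (e.g. $B\subseteq\mathcal{X}_1$ with $B\times\mathcal{X}_2$, $f\in\mathcal{G}(\mathcal{X}_1)$ with $f(X_1)(x_1,x_2)=f(x_1)$). For coherent sets of desirable gambles $\mathcal{D}_1,\mathcal{D}_2$ on $\mathcal{X}_1,\mathcal{X}_2$: $\mathcal{D}_1\otimes\mathcal{D}_2:=\mathcal{E}(\mathcal{A}_{1\to2}\cup\mathcal{A}_{2\to1})$ with $\mathcal{A}_{1\to2}:=\{f_2(X_2)\mathbb{I}_{B_1}(X_1)\colon f_2\in\mathcal{D}_2,B_1\in\mathcal{B}_1\cup\{\mathcal{X}_1\}\}$, $\mathcal{A}_{2\to1}:=\{f_1(X_1)\mathbb{I}_{B_2}(X_2)\colon f_1\in\mathcal{D}_1,B_2\in\mathcal{B}_2\cup\{\mathcal{X}_2\}\}$. A domain $\mathcal{C}\subseteq\mathcal{C}(\mathcal{X}_1\times\mathcal{X}_2)$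 is independent if for all $\{i,j\}=\{1,2\}$, all $(f_i,B_i)\in\mathcal{C}(\mathcal{X}_i)$ and all $B_j\in\mathcal{B}_j$: $(f_i,B_i)\in\mathcal{C}\iff(f_i,B_i\cap B_j)\in\mathcal{C}$. A coherent conditional lower prevision $\underline{P}$ on an independent domain $\mathcal{C}$ is epistemically independent if $\underline{P}(f_i\vert B_i)=\underline{P}(f_i\vert B_i\cap B_j)$ for all $\{i,j\}=\{1,2\}$, $(f_i,B_i)\in\mathcal{C}$ (with $f_i,B_i$ on $\mathcal{X}_i$) and $B_j\in\mathcal{B}_j$. An independent product of $\underline{P}_1,\underline{P}_2$ is an epistemically independent coherent conditional lower prevision $\underline{P}$ on $\mathcal{C}$ with $\underline{P}(f_i\vert B_i)=\underline{P}_i(f_i\vert B_i)$ for all $i$ and $(f_i,B_i)\in\mathcal{C}_i$; the independent natural extension is the pointwise smallest independent product. *)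

(* Defs.v *)
From HB Require Import structures.
From mathcomp Require Import all_boot all_order all_algebra.
From mathcomp Require Import boolp classical_sets reals constructive_ereal ereal.
Set Implicit Arguments. Unset Strict Implicit. Unset Printing Implicit Defensive.
Import Order.TTheory GRing.Theory Num.Theory.
Local Open Scope classical_set_scope.
Local Open Scope ring_scope.

Section Gambles.
Variable R : realType.

Section OneSpace.
Variable T : Type.

Definition gamble (f : T -> R) : Prop := exists M : R, forall x, `|f x| <= M.

Definition gamble_pos (f : T -> R) : Prop :=
  gamble f /\ (forall x, 0 <= f x) /\ (exists x, f x != 0).

Definition ind (B : set T) (x : T) : R := (x \in B)%:R.

Definition posi (A : set (T -> R)) : set (T -> R) :=
  [set g | exists (n : nat) (lam : nat -> R) (fs : nat -> T -> R),
     (0 < n)%N /\ (forall i, (i < n)%N -> 0 < lam i /\ A (fs i)) /\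
     g = (fun x => \sum_(i < n) lam i * fs i x)].

Definition natext (A : set (T -> R)) : set (T -> R) :=
  posi (A `|` [set f | gamble_pos f]).

Definition coherent_dg (D : set (T -> R)) : Prop :=
  (forall f, D f -> gamble f) /\
  (forall f, gamble_pos f -> D f) /\
  (forall f (lam : R), D f -> 0 < lam -> D (fun x => lam * f x)) /\
  (forall f g, D f -> D g -> D (fun x => f x + g x)) /\
  (forall f, gamble f -> (forall x, f x <= 0) -> ~ D f).

Definition cond_domain : set ((T -> R) * set T) :=
  [set p | gamble p.1 /\ p.2 !=set0].

(* lower prevision induced by D:  sup { mu | [f - mu] I_B ∈ D }  (sup ∅ = -oo) *)
Definition lpr (D : set (T -> R)) (p : (T -> R) * set T) : \bar R :=
  ereal_sup ((fun mu : R => mu%:E) @`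
    [set mu : R | D (fun x => (p.1 x - mu) * ind p.2 x)]).

Definition coherent_lpr (C : set ((T -> R) * set T))
    (P : (T -> R) * set T -> \bar R) : Prop :=
  exists D, coherent_dg D /\ forall p, C p -> P p = lpr D p.

Definition A_lpr (C : set ((T -> R) * set T))
    (P : (T -> R) * set T -> \bar R) : set (T -> R) :=
  [set g | exists f B (mu : R), C (f, B) /\ (mu%:E < P (f, B))%E /\
     g = (fun x => (f x - mu) * ind B x)].

Definition E_lpr C P := natext (A_lpr C P).

End OneSpace.

Section TwoSpaces.
Variables T1 T2 : Type.

Definition cyl1 (f : T1 -> R) : T1 * T2 -> R := fun x => f x.1.
Definition cyl2 (f : T2 -> R) : T1 * T2 -> R := fun x => f x.2.
Definition cyl1s (B : set T1) : set (T1 * T2) := [set x | B x.1].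
Definition cyl2s (B : set T2) : set (T1 * T2) := [set x | B x.2].

Variables (BB1 : set (set T1)) (BB2 : set (set T2)).

Definition dprod (D1 : set (T1 -> R)) (D2 : set (T2 -> R)) : set (T1 * T2 -> R) :=
  natext
   ([set g | exists f2 B1, D2 f2 /\ (BB1 B1 \/ B1 = setT) /\
        g = (fun x => f2 x.2 * ind B1 x.1)] `|`
    [set g | exists f1 B2, D1 f1 /\ (BB2 B2 \/ B2 = setT) /\
        g = (fun x => f1 x.1 * ind B2 x.2)]).

Definition indep_domain (C : set ((T1 * T2 -> R) * set (T1 * T2))) : Prop :=
  (forall f1 B1 B2, cond_domain (f1, B1) -> BB2 B2 ->
     (C (cyl1 f1, cyl1s B1) <-> C (cyl1 f1, cyl1s B1 `&` cyl2s B2))) /\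
  (forall f2 B2 B1, cond_domain (f2, B2) -> BB1 B1 ->
     (C (cyl2 f2, cyl2s B2) <-> C (cyl2 f2, cyl2s B2 `&` cyl1s B1))).

Definition epist_indep (C : set ((T1 * T2 -> R) * set (T1 * T2)))
    (P : (T1 * T2 -> R) * set (T1 * T2) -> \bar R) : Prop :=
  coherent_lpr C P /\
  (forall f1 B1 B2, C (cyl1 f1, cyl1s B1) -> BB2 B2 ->
     P (cyl1 f1, cyl1s B1) = P (cyl1 f1, cyl1s B1 `&` cyl2s B2)) /\
  (forall f2 B2 B1, C (cyl2 f2, cyl2s B2) -> BB1 B1 ->
     P (cyl2 f2, cyl2s B2) = P (cyl2 f2, cyl2s B2 `&` cyl1s B1)).

Definition indep_product
    (C1 : set ((T1 -> R) * set T1)) (C2 : set ((T2 -> R) * set T2))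
    (P1 : (T1 -> R) * set T1 -> \bar R) (P2 : (T2 -> R) * set T2 -> \bar R)
    (C : set ((T1 * T2 -> R) * set (T1 * T2)))
    (P : (T1 * T2 -> R) * set (T1 * T2) -> \bar R) : Prop :=
  epist_indep C P /\
  (forall p, C1 p -> P (cyl1 p.1, cyl1s p.2) = P1 p) /\
  (forall p, C2 p -> P (cyl2 p.1, cyl2s p.2) = P2 p).

Definition indep_natext C1 C2 P1 P2 C Q : Prop :=
  indep_product C1 C2 P1 P2 C Q /\
  forall P, indep_product C1 C2 P1 P2 C P -> forall p, C p -> (Q p <= P p)%E.

End TwoSpaces.
End Gambles.

(* Main.v *)
Require Import Defs.
From HB Require Import structures.
From mathcomp Require Import all_boot all_order all_algebra.
From mathcomp Require Import boolp classical_sets reals constructive_ereal ereal.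
From mathcomp Require Import lra.
Set Implicit Arguments. Unset Strict Implicit. Unset Printing Implicit Defensive.
Import Order.TTheory GRing.Theory Num.Theory.
Local Open Scope classical_set_scope.
Local Open Scope ring_scope.


Section Basics.
Variable R : realType.
Variable T : Type.
Implicit Types (f g h : T -> R) (D : set (T -> R)).

Lemma indE (B : set T) x : ind R B x = if pselect (B x) then 1 else 0.
Proof.
rewrite /ind; case: pselect => Bx; first by rewrite mem_set.
by rewrite memNset.
Qed.

Lemma ind_ge0 (B : set T) x : 0 <= ind R B x.
Proof. by rewrite indE; case: pselect. Qed.

Lemma ind_le1 (B : set T) x : ind R B x <= 1.
Proof. by rewrite indE; case: pselect. Qed.

Lemma ind1 (B : set T) x : B x -> ind R B x = 1.
Proof. by move=> Bx; rewrite indE; case: pselect. Qed.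

Lemma ind0 (B : set T) x : ~ B x -> ind R B x = 0.
Proof. by move=> Bx; rewrite indE; case: pselect. Qed.

Lemma indI (A B : set T) x : ind R (A `&` B) x = ind R A x * ind R B x.
Proof.
have [Ax|nA] := pselect (A x); have [Bx|nB] := pselect (B x).
- by rewrite !ind1 ?mulr1.
- by rewrite (ind0 nB) ind0 ?mulr0 // => -[].
- by rewrite (ind0 nA) ind0 ?mul0r // => -[].
- by rewrite (ind0 nA) ind0 ?mul0r // => -[].
Qed.

Lemma indT x : ind R (@setT T) x = 1.
Proof. exact: ind1. Qed.

Lemma gamble_cst (c : R) : gamble (fun _ : T => c).
Proof. by exists `|c|. Qed.

Lemma gamble_add f g : gamble f -> gamble g -> gamble (fun x => f x + g x).
Proof.
move=> [M hM] [N hN]; exists (M + N) => x.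
by apply: le_trans (ler_normD _ _) _; apply: lerD.
Qed.

Lemma gamble_mul f g : gamble f -> gamble g -> gamble (fun x => f x * g x).
Proof.
move=> [M hM] [N hN]; exists (M * N) => x.
rewrite normrM; apply: ler_pM => //; exact: normr_ge0.
Qed.

Lemma gamble_scale (c : R) f : gamble f -> gamble (fun x => c * f x).
Proof. by move=> gf; apply: gamble_mul => //; exact: gamble_cst. Qed.

Lemma gamble_opp f : gamble f -> gamble (fun x => - f x).
Proof. by move=> [M hM]; exists M => x; rewrite normrN. Qed.

Lemma gamble_ind (B : set T) : gamble (ind R B).
Proof. by exists 1 => x; rewrite ger0_norm ?ind_ge0 ?ind_le1. Qed.

Lemma gamble_sum (I : Type) (r : seq I) (F : I -> T -> R) :
  (forall i, gamble (F i)) -> gamble (fun x => \sum_(i <- r) F i x).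
Proof.
move=> gF; elim: r => [|i r IH].
  by under eq_fun do rewrite big_nil; exact: gamble_cst.
by under eq_fun do rewrite big_cons; apply: gamble_add.
Qed.

Lemma gamble_sum_in (I : Type) (r : seq I) (F : I -> T -> R) :
  (forall i, List.In i r -> gamble (F i)) -> gamble (fun x => \sum_(i <- r) F i x).
Proof.
elim: r => [|i r IH] gF.
  by under eq_fun do rewrite big_nil; exact: gamble_cst.
under eq_fun do rewrite big_cons; apply: gamble_add.
  by apply: gF; left.
by apply: IH => j hj; apply: gF; right.
Qed.

Lemma In_iota (i m n : nat) : List.In i (iota m n) <-> (m <= i < m + n)%N.
Proof.
elim: n m => [|n IH] m /=; first by rewrite addn0; split => // /andP[a b]; move: (leq_trans b a); rewrite ltnn.
split.
  case=> [->|/IH/andP[a b]]; first by rewrite leqnn addnS ltnS leq_addr.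
  by rewrite (ltnW a) /= addnS -addSn.
move=> /andP[a b]; case: (eqVneq m i) => [->|ne]; first by left.
right; apply/IH; rewrite addSn -addnS b andbT ltn_neqAle ne a.
by [].
Qed.

Definition Dz D f := D f \/ (gamble f /\ forall x, 0 <= f x).

Section Coh.
Variable D : set (T -> R).
Hypothesis hD : coherent_dg D.

Lemma cohG f : D f -> gamble f. Proof. by move: hD => [h _]; apply: h. Qed.
Lemma cohP f : gamble_pos f -> D f. Proof. by move: hD => [_ [h _]]; apply: h. Qed.
Lemma cohS f (c : R) : D f -> 0 < c -> D (fun x => c * f x).
Proof. by move: hD => [_ [_ [h _]]]; apply: h. Qed.
Lemma cohA f g : D f -> D g -> D (fun x => f x + g x).
Proof. by move: hD => [_ [_ [_ [h _]]]]; apply: h. Qed.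
Lemma cohN f : D f -> exists x, 0 < f x.
Proof.
move=> Df; apply: contrapT => hn.
move: hD => [_ [_ [_ [_ h]]]]; apply: (h f) => // [|x].
  exact: cohG.
by rewrite leNgt; apply/negP => fx; apply: hn; exists x.
Qed.

Lemma coh0 : ~ D (fun _ => 0).
Proof. by move=> /cohN [x]; rewrite ltxx. Qed.

Lemma DDz f g : D f -> Dz D g -> D (fun x => f x + g x).
Proof.
move=> Df [Dg|[gg g0]]; first exact: cohA.
have [nz|z] := pselect (exists x, g x != 0).
  by apply: cohA => //; apply: cohP.
have -> : (fun x => f x + g x) = f => //.
apply/funext => x; have : g x = 0.
  by apply: contrapT => gx; apply: z; exists x; apply/eqP.
by move=> ->; rewrite addr0.
Qed.

Lemma DzD f : D f -> Dz D f. Proof. by left. Qed.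

Lemma DzA f g : Dz D f -> Dz D g -> Dz D (fun x => f x + g x).
Proof.
move=> [Df|hf] hg; first by left; apply: DDz.
case: hg => [Dg|[gg g0]].
  by left; under eq_fun do rewrite addrC; apply: DDz => //; right.
right; split; first by apply: gamble_add => //; case: hf.
by move=> x; apply: addr_ge0 => //; case: hf.
Qed.

Lemma Dz0 : Dz D (fun _ => 0).
Proof. by right; split => //; exact: gamble_cst. Qed.

Lemma DzS f (c : R) : Dz D f -> 0 <= c -> Dz D (fun x => c * f x).
Proof.
move=> hf; rewrite le_eqVlt => /orP[/eqP<-|c0].
  by under eq_fun do rewrite mul0r; exact: Dz0.
case: hf => [Df|[gf f0]]; first by left; apply: cohS.
right; split; first exact: gamble_scale.
by move=> x; apply: mulr_ge0 => //; apply: ltW.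
Qed.

Lemma Dz_sum (I : Type) (r : seq I) (F : I -> T -> R) :
  (forall i, List.In i r -> Dz D (F i)) -> Dz D (fun x => \sum_(i <- r) F i x).
Proof.
elim: r => [|i r IH] hF.
  by under eq_fun do rewrite big_nil; exact: Dz0.
under eq_fun do rewrite big_cons; apply: DzA.
  by apply: hF; left.
by apply: IH => j hj; apply: hF; right.
Qed.

Lemma D_sum (I : Type) (r : seq I) (F : I -> T -> R) :
  (forall i, List.In i r -> Dz D (F i)) -> (exists i, List.In i r /\ D (F i)) ->
  D (fun x => \sum_(i <- r) F i x).
Proof.
elim: r => [|i r IH] hF [j [hj Dj]]; first by [].
under eq_fun do rewrite big_cons.
case: hj => [eij|jr].
  subst j; apply: DDz => //; apply: Dz_sum => k hk; apply: hF; right.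
  exact: hk.
under eq_fun do rewrite addrC; apply: DDz.
  by apply: IH; [move=> k hk; apply: hF; right | exists j].
by apply: hF; left.
Qed.

Lemma D_le f g : D f -> gamble g -> (forall x, f x <= g x) -> D g.
Proof.
move=> Df gg fg.
have -> : g = (fun x => f x + (g x - f x)).
  by apply/funext => x; rewrite addrC subrK.
apply: DDz => //; right; split.
  by apply: gamble_add => //; apply: gamble_opp; apply: cohG.
by move=> x; rewrite subr_ge0.
Qed.

Lemma posi_sub (A : set (T -> R)) : A `<=` D -> posi A `<=` D.
Proof.
move=> AD g [n [lam [fs [n0 [hl ->]]]]].
have -> : (fun x => \sum_(i < n) lam i * fs i x) =
   (fun x => \sum_(i <- iota 0 n) lam i * fs i x).
  by apply/funext => x; rewrite -(big_mkord xpredT (fun i => lam i * fs i x)) /index_iota subn0.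
apply: D_sum.
  move=> i /In_iota; rewrite add0n => /andP[_ hi]; left.
  have [l0 Af] := hl _ hi.
  by apply: cohS => //; apply: AD.
exists 0%N; split; first by apply/In_iota; rewrite add0n.
by have /hl [l0 Af] := n0; apply: cohS => //; apply: AD.
Qed.

Lemma natext_sub (A : set (T -> R)) : A `<=` D -> natext A `<=` D.
Proof.
move=> AD; apply: posi_sub => f [/AD //|]; exact: cohP.
Qed.

End Coh.
End Basics.


Section Two.
Variable R : realType.

Lemma lee_of_lt (x y : \bar R) :
  (forall r : R, (r%:E < x)%E -> (r%:E <= y)%E) -> (x <= y)%E.
Proof.
case: x => [a| |] h; last by rewrite leNye.
- case: y h => [b| |] h; last 2 first.
  + by rewrite leey.
  + have := h (a - 1); rewrite lte_fin gtrDl ltrN10 => /(_ isT).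
    by rewrite leeNy_eq.
  rewrite lee_fin; rewrite leNgt; apply/negP => ba.
  have := h ((a + b) / 2); rewrite !lte_fin !lee_fin.
  have -> : (a + b) / 2 < a by lra.
  move=> /(_ isT); lra.
- have -> // : y = +oo%E.
  apply/eqyP => r r0; apply: h; exact: ltry.
Qed.

Variable T : Type.
Implicit Types (f g h : T -> R) (D : set (T -> R)).

Lemma posi_in (A : set (T -> R)) f : A f -> posi A f.
Proof.
move=> Af; exists 1%N, (fun _ => 1), (fun _ => f); split => //; split.
  by move=> i _; split => //; exact: ltr01.
by apply/funext => x; rewrite big_ord1 mul1r.
Qed.

Lemma natext_in (A : set (T -> R)) f : A f -> natext A f.
Proof. by move=> Af; apply: posi_in; left. Qed.

Lemma natext_pos (A : set (T -> R)) f : gamble_pos f -> natext A f.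
Proof. by move=> Af; apply: posi_in; right. Qed.

Lemma posi_gamble (A : set (T -> R)) : (forall f, A f -> gamble f) ->
  forall f, posi A f -> gamble f.
Proof.
move=> hA g [n [lam [fs [n0 [hl ->]]]]].
have -> : (fun x => \sum_(i < n) lam i * fs i x) =
   (fun x => \sum_(i <- iota 0 n) lam i * fs i x).
  by apply/funext => x; rewrite -(big_mkord xpredT (fun i => lam i * fs i x)) /index_iota subn0.
apply: gamble_sum_in => i /In_iota; rewrite add0n => /andP[_ hi].
by have [_ /hA ?] := hl _ hi; apply: gamble_scale.
Qed.

Lemma posiS (A : set (T -> R)) f (c : R) : posi A f -> 0 < c -> posi A (fun x => c * f x).
Proof.
move=> [n [lam [fs [n0 [hl ->]]]]] c0.
exists n, (fun i => c * lam i), fs; split => //; split.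
  by move=> i /hl [l0 Af]; split => //; apply: mulr_gt0.
by apply/funext => x; rewrite mulr_sumr; apply: eq_bigr => i _; rewrite mulrA.
Qed.

Lemma posiA (A : set (T -> R)) f g : posi A f -> posi A g -> posi A (fun x => f x + g x).
Proof.
move=> [n [lam [fs [n0 [hl ->]]]]] [m [lam' [fs' [m0 [hl' ->]]]]].
exists (n + m)%N, (fun i => if (i < n)%N then lam i else lam' (i - n)%N),
  (fun i => if (i < n)%N then fs i else fs' (i - n)%N); split.
  by rewrite addn_gt0 n0.
split.
  move=> i hi; case: ifP => hin; first exact: hl.
  by apply: hl'; rewrite ltn_subLR // leqNgt hin.
apply/funext => x; rewrite big_split_ord /=; congr (_ + _).
  by apply: eq_bigr => i _ /=; rewrite ltn_ord.
apply: eq_bigr => i _ /=; rewrite ltnNge leq_addr /= addKn //.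
Qed.

Lemma natext_coh (A : set (T -> R)) : (forall f, A f -> gamble f) ->
  (forall f, natext A f -> ~ (forall x, f x <= 0)) -> coherent_dg (natext A).
Proof.
move=> hA hN; split.
  apply: posi_gamble => f [/hA //|[]//].
split; first by move=> f; apply: natext_pos.
split; first by move=> f c fA c0; apply: posiS.
split; first by move=> f g; apply: posiA.
by move=> f _ fle fA; apply: (hN f).
Qed.

Lemma lpr_le D D' p : D `<=` D' -> (lpr D p <= lpr D' p)%E.
Proof.
move=> DD'; apply: ereal_sup_le => _ [mu Dmu <-]; exists mu => //; exact: DD'.
Qed.

Lemma lpr_ge D p (P : \bar R) :
  (forall mu : R, (mu%:E < P)%E -> D (fun x => (p.1 x - mu) * ind R p.2 x)) ->
  (P <= lpr D p)%E.
Proof.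
move=> h; apply: lee_of_lt => r rP; apply: ereal_sup_ubound; exists r => //.
exact: h.
Qed.

Lemma AP_sub (C : set ((T -> R) * set T)) P D :
  coherent_dg D -> C `<=` @cond_domain R T -> (forall p, C p -> P p = lpr D p) ->
  A_lpr C P `<=` D.
Proof.
move=> cD hC hP _ [f [B [mu [CfB [muP ->]]]]].
rewrite hP // in muP.
have [_ [mu' Dmu' <-] /=] := ereal_sup_gt muP.
rewrite lte_fin => mumu'.
have [_ [b Bb]] := hC _ CfB.
have -> : (fun x => (f x - mu) * ind R B x) =
   (fun x => (f x - mu') * ind R B x + (mu' - mu) * ind R B x).
  by apply/funext => x; rewrite -mulrDl addrA subrK.
apply: cohA => //; apply: cohP => //; split.
  by apply: gamble_scale; exact: gamble_ind.
split.
  by move=> x; apply: mulr_ge0; [rewrite subr_ge0 ltW | exact: ind_ge0].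
exists b; rewrite ind1 // mulr1; apply/eqP => /eqP; rewrite subr_eq0 => /eqP e.
by move: mumu'; rewrite e ltxx.
Qed.

Lemma A_gamble (C : set ((T -> R) * set T)) P :
  C `<=` @cond_domain R T -> forall f, A_lpr C P f -> gamble f.
Proof.
move=> hC _ [f [B [mu [CfB [_ ->]]]]].
apply: gamble_mul; last exact: gamble_ind.
apply: gamble_add; last exact: gamble_cst.
by have [] := hC _ CfB.
Qed.

Lemma E_coh (C : set ((T -> R) * set T)) P :
  C `<=` @cond_domain R T -> coherent_lpr C P -> coherent_dg (E_lpr C P).
Proof.
move=> hC [D [cD hP]]; apply: natext_coh; first exact: A_gamble.
move=> f Ef fle.
have Df : D f by apply: (natext_sub cD (AP_sub cD hC hP)).
have [x fx] := cohN cD Df.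
by move: (fle x); rewrite leNgt fx.
Qed.

Lemma lpr_E (C : set ((T -> R) * set T)) P :
  C `<=` @cond_domain R T -> coherent_lpr C P ->
  forall p, C p -> lpr (E_lpr C P) p = P p.
Proof.
move=> hC [D [cD hP]] [f B] CfB; apply/eqP; rewrite eq_le; apply/andP; split.
  rewrite hP //; apply: lpr_le; exact: (natext_sub cD (AP_sub cD hC hP)).
apply: lpr_ge => mu muP; apply: natext_in; exists f, B, mu; split => //.
Qed.

End Two.


Section Sep.
Variable R : realType.

Lemma sum_recr (F : nat -> R) m : \sum_(i < m.+1) F i = \sum_(i < m) F i + F m.
Proof. by rewrite big_ord_recr. Qed.

Lemma div_le_div (a b c d : R) : 0 < a -> 0 < c -> (b / a <= d / c) = (b * c <= d * a).
Proof. by move=> a0 c0; rewrite ler_pdivrMr // mulrAC ler_pdivlMr. Qed.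

Lemma sup_le_nonneg (S : set R) (b : R) : 0 <= b -> (forall r, S r -> r <= b) ->
  sup S <= b.
Proof.
move=> b0 hb; have [[r Sr]|S0] := pselect (S !=set0).
  by apply: ge_sup; [exists r | move=> y /hb].
have -> : S = set0.
  by apply/seteqP; split => // y Sy; apply: S0; exists y.
by rewrite sup0.
Qed.

Lemma sum_ge0_In (I : Type) (s : seq I) (F : I -> R) :
  (forall q, List.In q s -> 0 <= F q) -> 0 <= \sum_(q <- s) F q.
Proof.
elim: s => [|q s IH] h; first by rewrite big_nil.
rewrite big_cons; apply: addr_ge0; first by apply: h; left.
by apply: IH => q' hq; apply: h; right.
Qed.

Fixpoint expand (X : Type) (a b : X * X -> R) (s : seq (R * (X * X))) : seq (R * X) :=
  match s with
  | [::] => [::]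
  | q :: s' => (q.1 * a q.2, q.2.1) :: (q.1 * b q.2, q.2.2) :: expand a b s'
  end.

Lemma expand_sum (X : Type) (a b : X * X -> R) (s : seq (R * (X * X))) (v : X -> R) :
  \sum_(q <- expand a b s) q.1 * v q.2 =
  \sum_(q <- s) q.1 * (a q.2 * v q.2.1 + b q.2 * v q.2.2).
Proof.
elim: s => [|q s IH] /=; first by rewrite !big_nil.
by rewrite !big_cons IH addrA mulrDr !mulrA.
Qed.

Lemma expand_ge0 (X : Type) (a b : X * X -> R) (s : seq (R * (X * X))) :
  (forall xz, 0 <= a xz) -> (forall xz, 0 <= b xz) ->
  (forall q, List.In q s -> 0 <= q.1) ->
  forall q, List.In q (expand a b s) -> 0 <= q.1.
Proof.
move=> a0 b0; elim: s => [|q s IH] //= hs r.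
case=> [<-|[<-|]] /=.
- by apply: mulr_ge0 => //; apply: hs; left.
- by apply: mulr_ge0 => //; apply: hs; left.
- by apply: IH => q' hq'; apply: hs; right.
Qed.

Lemma sep (m : nat) : forall (X : Type) (u : nat -> X -> R) (p : nat -> bool),
  (forall c : nat -> R, (forall i, (i < m)%N -> 0 <= c i) ->
     (exists i, (i < m)%N /\ p i /\ 0 < c i) ->
     exists x, 0 < \sum_(i < m) c i * u i x) ->
  (exists i, (i < m)%N /\ p i) ->
  exists s : seq (R * X), (forall q, List.In q s -> 0 <= q.1) /\
    (forall i, (i < m)%N -> p i -> 0 <= \sum_(q <- s) q.1 * u i q.2) /\
    (exists i, (i < m)%N /\ p i /\ 0 < \sum_(q <- s) q.1 * u i q.2).
Proof.
elim: m => [|m IH] X u p hyp [i0 [hi0 pi0]]; first by [].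
have [pm|pm] := boolP (p m); last first.
  have hi0m : (i0 < m)%N.
    by rewrite ltn_neqAle -ltnS hi0 andbT; apply/eqP => e; move: pm; rewrite -e pi0.
  suff hyp' : forall c : nat -> R, (forall i, (i < m)%N -> 0 <= c i) ->
     (exists i, (i < m)%N /\ p i /\ 0 < c i) ->
     exists x, 0 < \sum_(i < m) c i * u i x.
    have [s [s0 [s1 s2]]] := IH X u p hyp' (ex_intro _ i0 (conj hi0m pi0)).
    exists s; split => //; split.
      move=> i hi pi; apply: s1 => //; rewrite ltn_neqAle -ltnS hi andbT.
      by apply/eqP => e; move: pm; rewrite -e pi.
    by have [i [hi [pi si]]] := s2; exists i; split => //; apply: ltnW.
  move=> c c0 [i [hi [pi ci]]].
  have [x hx] : exists x, 0 < \sum_(j < m.+1) ((fun j => if j == m then 0 else c j)) j * u j x.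
  apply: (hyp (fun j => if j == m then 0 else c j)).
  - move=> j hj; case: eqP => // jm; apply: c0.
    by rewrite ltn_neqAle -ltnS hj andbT; apply/eqP.
  - exists i; split; first exact: ltnW.
    by rewrite (ltn_eqF hi).
  exists x; move: hx; rewrite (sum_recr (fun j => (if j == m then 0 else c j) * u j x)).
  rewrite eqxx mul0r addr0; congr (_ < _); apply: eq_bigr => j _.
  by rewrite (ltn_eqF (ltn_ord j)).
have [[i1 [hi1 pi1]]|nomask] := pselect (exists i, (i < m)%N /\ p i); last first.
  have [x hx] : exists x, 0 < \sum_(j < m.+1) ((fun j => (j == m)%:R)) j * u j x.
  apply: (hyp (fun j => (j == m)%:R)).
  - by move=> j _; case: (j == m).
  - by exists m; rewrite ltnSn eqxx ltr01.
  move: hx; rewrite (sum_recr (fun j => (j == m)%:R * u j x)) eqxx mul1r.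
  rewrite big1 ?add0r => [hx|j _]; last by rewrite (ltn_eqF (ltn_ord j)) mul0r.
  exists [:: (1, x)]; split; first by move=> q [<-|].
  have onlym : forall i, (i < m.+1)%N -> p i -> i = m.
    move=> i hi pi; apply/eqP; rewrite eqn_leq -ltnS hi /= leqNgt; apply/negP => im.
    by apply: nomask; exists i.
  split.
    by move=> i hi pi; rewrite (onlym _ hi pi) big_cons big_nil mul1r addr0 ltW.
  by exists m; rewrite ltnSn big_cons big_nil mul1r addr0.
pose a := fun xz : X * X => if 0 <= u m xz.1 then (if 0 <= u m xz.2 then 1 else - u m xz.2) else 0.
pose b := fun xz : X * X => if 0 <= u m xz.1 then (if 0 <= u m xz.2 then 0 else u m xz.1) else 0.
have a0 : forall xz, 0 <= a xz.
  move=> [x z]; rewrite /a /=; case: (leP 0 (u m x)) => // _.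
  by case: (leP 0 (u m z)) => // h; rewrite oppr_ge0 ltW.
have b0 : forall xz, 0 <= b xz.
  move=> [x z]; rewrite /b /=; case: (leP 0 (u m x)) => // h.
  by case: (leP 0 (u m z)).
have last0 : forall xz, 0 <= a xz * u m xz.1 + b xz * u m xz.2.
  move=> [x z]; rewrite /a /b /=; case: (leP 0 (u m x)) => hx; last by rewrite !mul0r addr0.
  case: (leP 0 (u m z)) => hz; first by rewrite mul1r mul0r addr0.
  by rewrite mulNr mulrC addNr.
pose u' := fun i (xz : X * X) => a xz * u i xz.1 + b xz * u i xz.2.
suff hyp' : forall c : nat -> R, (forall i, (i < m)%N -> 0 <= c i) ->
     (exists i, (i < m)%N /\ p i /\ 0 < c i) ->
     exists x, 0 < \sum_(i < m) c i * u' i x.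
  have [s' [s0 [s1 s2]]] := IH (X * X)%type u' p hyp' (ex_intro _ i1 (conj hi1 pi1)).
  exists (expand a b s'); split; first exact: expand_ge0.
  split.
    move=> i hi pi; rewrite expand_sum.
    have [im|] := boolP (i < m)%N; first exact: s1.
    rewrite -leqNgt => mi; have -> : i = m by apply/eqP; rewrite eqn_leq mi -ltnS hi.
    by apply: sum_ge0_In => q /s0 q0; apply: mulr_ge0; [|exact: last0].
  have [i [hi [pi si]]] := s2; exists i; split; first exact: ltnW.
  by rewrite expand_sum.
move=> c c0 [i [hi [pi ci]]]; apply: contrapT => hneg.
  have hle : forall xz, \sum_(i < m) c i * u' i xz <= 0.
    move=> xz; rewrite leNgt; apply/negP => h; apply: hneg; by exists xz.
  pose d := fun x => \sum_(i < m) c i * u i x.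
  have hd : forall xz, \sum_(i < m) c i * u' i xz = a xz * d xz.1 + b xz * d xz.2.
    move=> xz; rewrite /d !mulr_sumr -big_split /=; apply: eq_bigr => j _.
    by rewrite /u' mulrDr !mulrA [c j * a xz]mulrC [c j * b xz]mulrC.
  have F1 : forall x, 0 <= u m x -> d x <= 0.
    move=> x hx; have := hle (x, x); rewrite hd /a /b /= hx mul1r mul0r addr0 //.
  have F2 : forall x z, 0 <= u m x -> u m z < 0 -> - u m z * d x + u m x * d z <= 0.
    move=> x z hx hz; have := hle (x, z); rewrite hd /a /b /= hx.
    by rewrite (lt_geF hz).
  have [hx0|allneg] := pselect (exists x, 0 < u m x); last first.
    have [x hx] : exists x, 0 < \sum_(j < m.+1) ((fun j => (j == m)%:R)) j * u j x.
  apply: (hyp (fun j => (j == m)%:R)).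
    - by move=> j _; case: (j == m).
    - by exists m; rewrite ltnSn pm eqxx ltr01.
    move: hx; rewrite (sum_recr (fun j => (j == m)%:R * u j x)) eqxx mul1r.
    rewrite big1 ?add0r => [hx|j _]; last by rewrite (ltn_eqF (ltn_ord j)) mul0r.
    by apply: allneg; exists x.
  case: hx0 => x0 hx0.
  pose S := [set r | exists z, u m z < 0 /\ r = d z / (- u m z)].
  have Sub : forall r, S r -> r <= - d x0 / u m x0.
    move=> _ [z [hz ->]]; have := F2 x0 z (ltW hx0) hz.
    rewrite div_le_div ?oppr_gt0 //; nra.
  pose t := Num.max 0 (sup S).
  have t0 : 0 <= t by rewrite /t le_max lexx.
  have [x hx] : exists x, 0 < \sum_(j < m.+1) ((fun j => if j == m then t else c j)) j * u j x.
  apply: (hyp (fun j => if j == m then t else c j)).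
  - move=> j hj; case: eqP => // jm; apply: c0.
    by rewrite ltn_neqAle -ltnS hj andbT; apply/eqP.
  - by exists i; split; [exact: ltnW | rewrite (ltn_eqF hi)].
  move: hx; rewrite (sum_recr (fun j => (if j == m then t else c j) * u j x)) eqxx.
  have -> : \sum_(j < m) (if (j == m :> nat) then t else c j) * u j x = d x.
    by apply: eq_bigr => j _; rewrite (ltn_eqF (ltn_ord j)).
  apply/negP; rewrite -leNgt.
  case: (ltgtP 0 (u m x)) => hx.
  - have hb : t <= - d x / u m x.
      rewrite /t ge_max; apply/andP; split.
        by rewrite divr_ge0 // ?oppr_ge0 ?F1 ?ltW.
      apply: sup_le_nonneg; first by rewrite divr_ge0 // ?oppr_ge0 ?F1 ?ltW.
      move=> _ [z [hz ->]]; have := F2 x z (ltW hx) hz.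
      rewrite div_le_div ?oppr_gt0 //; nra.
    move: hb; rewrite ler_pdivlMr // => hb; lra.
  - have hS : S (d x / (- u m x)) by exists x.
    have hsup : d x / (- u m x) <= sup S.
      apply: sup_upper_bound => //; split; first by exists (d x / (- u m x)).
      by exists (- d x0 / u m x0) => r /Sub.
    have : d x / (- u m x) <= t by apply: le_trans hsup _; rewrite /t le_max lexx orbT.
    rewrite ler_pdivrMr ?oppr_gt0 // => h; lra.
  - by rewrite -hx mulr0 addr0 F1 // hx.
Qed.

End Sep.


Section Key.
Variable R : realType.
Variables T1 T2 : Type.
Hypothesis ne1 : exists x : T1, True.
Hypothesis ne2 : exists x : T2, True.
Variables (BB1 : set (set T1)) (BB2 : set (set T2)).
Hypothesis hBB1 : forall B, BB1 B -> B !=set0.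
Hypothesis hBB2 : forall B, BB2 B -> B !=set0.
Variables (D1 : set (T1 -> R)) (D2 : set (T2 -> R)).
Hypothesis cD1 : coherent_dg D1.
Hypothesis cD2 : coherent_dg D2.

Lemma gamble_sec (f : T1 * T2 -> R) y : gamble f -> gamble (fun x1 => f (x1, y)).
Proof. by move=> [M hM]; exists M. Qed.

Lemma sum_iota (n : nat) (F : nat -> R) : \sum_(i < n) F i = \sum_(i <- iota 0 n) F i.
Proof. by rewrite -(big_mkord xpredT F) /index_iota subn0. Qed.

Lemma ne_E1 (E : set T1) : BB1 E \/ E = setT -> E !=set0.
Proof. by case=> [/hBB1 //|->]; case: ne1 => x _; exists x. Qed.
Lemma ne_E2 (E : set T2) : BB2 E \/ E = setT -> E !=set0.
Proof. by case=> [/hBB2 //|->]; case: ne2 => x _; exists x. Qed.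

Lemma ler_sum_In (I : Type) (s : seq I) (F G : I -> R) :
  (forall q, List.In q s -> F q <= G q) -> \sum_(q <- s) F q <= \sum_(q <- s) G q.
Proof.
elim: s => [|q s IH] h; first by rewrite !big_nil.
rewrite !big_cons; apply: lerD; first by apply: h; left.
by apply: IH => q' hq; apply: h; right.
Qed.

Lemma keyK (k : T1 -> R) (B2 : set T2) (g : T1 * T2 -> R) :
  gamble k -> dprod BB1 BB2 D1 D2 g -> (forall x, g x <= k x.1 * ind R B2 x.2) -> D1 k.
Proof.
move=> gk [n [lam [fs [n0 [hl ->]]]]] hg.
pose Spec l (t : (T2 -> R) * set T1 * (T1 -> R) * set T2 * nat) :=
  (t.2 = 0%N /\ D2 t.1.1.1.1 /\ (BB1 t.1.1.1.2 \/ t.1.1.1.2 = setT) /\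
     fs l = (fun x => t.1.1.1.1 x.2 * ind R t.1.1.1.2 x.1)) \/
  (t.2 = 1%N /\ D1 t.1.1.2 /\ (BB2 t.1.2 \/ t.1.2 = setT) /\
     fs l = (fun x => t.1.1.2 x.1 * ind R t.1.2 x.2)) \/
  (t.2 = 2%N /\ gamble_pos (fs l)).
have hc : forall l, exists t, (l < n)%N -> Spec l t.
  move=> l; have [hln|hln] := boolP (l < n)%N; last first.
    by exists (fun _ => 0, set0, fun _ => 0, set0, 0%N).
  have [_ [[[f2 [B1 [Df2 [hB1 e]]]]|[f1 [B2' [Df1 [hB2 e]]]]]|gp]] := hl l hln.
  - by exists (f2, B1, fun _ => 0, set0, 0%N) => _; left.
  - by exists (fun _ => 0, set0, f1, B2', 1%N) => _; right; left.
  - by exists (fun _ => 0, set0, fun _ => 0, set0, 2%N) => _; right; right.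
have [F hF] := choice hc.
pose U l := (F l).1.1.1.1.
pose E1 l := (F l).1.1.1.2.
pose V l := (F l).1.1.2.
pose E2 l := (F l).1.2.
pose p l := ((F l).2 == 0%N).
pose term (s : seq (R * T2)) l := fun x1 => lam l * \sum_(q <- s) q.1 * fs l (x1, q.2).
suff [s [s0 [sU [l [hln Dl]]]]] : exists s : seq (R * T2),
    (forall q, List.In q s -> 0 <= q.1) /\
    (forall l, (l < n)%N -> p l -> 0 <= \sum_(q <- s) q.1 * U l q.2) /\
    (exists l, (l < n)%N /\ D1 (term s l)).
  pose Psi := fun x1 => \sum_(q <- s) q.1 * (\sum_(i < n) lam i * fs i (x1, q.2)).
  have hPsi : Psi = fun x1 => \sum_(l <- iota 0 n) term s l x1.
    apply/funext => x1; rewrite /Psi -sum_iota /term.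
    under eq_bigr do rewrite mulr_sumr.
    rewrite exchange_big /=; apply: eq_bigr => i _; rewrite mulr_sumr.
    by apply: eq_bigr => q _; rewrite mulrCA.
  have DPsi : D1 Psi.
    rewrite hPsi; apply: D_sum => //; last first.
      by exists l; split => //; apply/In_iota; rewrite add0n.
    move=> i /In_iota; rewrite add0n => /andP[_ hi].
    have li : 0 < lam i by have [] := hl i hi.
    case: (hF i hi) => [[t0 [DU [hE e]]]|[[t1 [DV [hE e]]]|[t2 gp]]].
    - right; split.
        rewrite /term e /=; apply: gamble_scale; apply: gamble_sum => q.
        by apply: gamble_scale; apply: gamble_mul; [exact: gamble_cst|exact: gamble_ind].
      move=> x1; rewrite /term e /=; apply: mulr_ge0; first exact: ltW.
      under eq_bigr do rewrite mulrA.
      rewrite -mulr_suml; apply: mulr_ge0; last exact: ind_ge0.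
      by apply: sU => //; rewrite /p t0.
    - have -> : term s i = (fun x1 => (lam i * \sum_(q <- s) q.1 * ind R (E2 i) q.2) * V i x1).
        apply/funext => x1; rewrite /term e /= -mulrA; congr (_ * _).
        by rewrite mulr_suml; apply: eq_bigr => q _; rewrite mulrA mulrAC.
      apply: (DzS cD1); first by left.
      apply: mulr_ge0; first exact: ltW.
      by apply: sum_ge0_In => q /s0 q0; apply: mulr_ge0 => //; exact: ind_ge0.
    - case: gp => gf [f0 _]; right; split.
        apply: gamble_scale; apply: gamble_sum => q; apply: gamble_scale.
        exact: gamble_sec.
      move=> x1; apply: mulr_ge0; first exact: ltW.
      by apply: sum_ge0_In => q /s0 q0; apply: mulr_ge0.
  pose W := \sum_(q <- s) q.1 * ind R B2 q.2.
  have W0 : 0 <= W by apply: sum_ge0_In => q /s0 q0; apply: mulr_ge0 => //; exact: ind_ge0.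
  have PsiW : forall x1, Psi x1 <= k x1 * W.
    move=> x1; rewrite /Psi /W mulr_sumr; apply: ler_sum_In => q /s0 q0.
    rewrite mulrCA; apply: ler_wpM2l => //; exact: (hg (x1, q.2)).
  have [W0'|Wpos] : W = 0 \/ 0 < W.
    by move: W0; rewrite le_eqVlt => /orP[/eqP<-|]; [left|right].
    have [x hx] := cohN cD1 DPsi.
    by move: (PsiW x); rewrite W0' mulr0 leNgt hx.
  have hle : forall x, W^-1 * Psi x <= k x.
    by move=> x; rewrite ler_pdivrMl // mulrC.
  have Wi : 0 < W^-1 by rewrite invr_gt0.
  exact: (D_le cD1 (cohS cD1 DPsi Wi) gk hle).
have Utag : forall j, (j < n)%N -> p j -> D2 (U j) /\ (BB1 (E1 j) \/ E1 j = setT) /\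
    fs j = (fun x => U j x.2 * ind R (E1 j) x.1).
  move=> j hj; rewrite /p; case: (hF j hj) => [[t0 [DU [hE e]]]|[[t1 _]|[t2 _]]].
  - by [].
  - by rewrite t1.
  - by rewrite t2.
have [[l0 [hl0 pl0]]|nomask] := pselect (exists l, (l < n)%N /\ p l).
  pose u := fun l => if p l then U l else (fun _ : T2 => 0).
  have [|s [s0 [s1 [i [hi [pi si]]]]]] := @sep R n T2 u p _ (ex_intro _ l0 (conj hl0 pl0)).
    move=> c c0 [i [hi [pi ci]]].
    have D2sum : D2 (fun x2 => \sum_(j < n) c j * u j x2).
      have -> : (fun x2 => \sum_(j < n) c j * u j x2) =
          (fun x2 => \sum_(j <- iota 0 n) c j * u j x2).
        by apply/funext => x2; rewrite (sum_iota n (fun j => c j * u j x2)).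
      apply: (D_sum cD2).
        move=> j /In_iota; rewrite add0n => /andP[_ hj]; rewrite /u; case: ifP => pj.
          apply: (DzS cD2) (c0 j hj); left; by have [] := Utag j hj pj.
        by under eq_fun do rewrite mulr0; right; split; [exact: gamble_cst|].
      exists i; split; first by apply/In_iota; rewrite add0n.
      by rewrite /u pi; apply: (cohS cD2) => //; have [] := Utag i hi pi.
    have [x hx] := cohN cD2 D2sum.
    by exists x.
  exists s; split => //; split.
    by move=> l hl1 pl; have := s1 l hl1 pl; rewrite /u pl.
  exists i; split => //.
  have [DU [hE e]] := Utag i hi pi.
  move: si; rewrite /u pi => si.
  have -> : term s i = (fun x1 => (lam i * \sum_(q <- s) q.1 * U i q.2) * ind R (E1 i) x1).
    apply/funext => x1; rewrite /term e /= -mulrA; congr (_ * _).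
    by rewrite mulr_suml; apply: eq_bigr => q _; rewrite mulrA.
  have li : 0 < lam i by have [] := hl i hi.
  apply: (cohP cD1); split.
    by apply: gamble_scale; exact: gamble_ind.
  split.
    by move=> x1; apply: mulr_ge0; [apply: mulr_ge0; apply: ltW|exact: ind_ge0].
  have [x1 hx1] := ne_E1 hE.
  by exists x1; rewrite ind1 // mulr1 mulf_neq0 // gt_eqF.
have [[l1 [hl1 t1]]|no1] := pselect (exists l, (l < n)%N /\ (F l).2 = 1%N).
  case: (hF l1 hl1) => [[t0 _]|[[_ [DV [hE e]]]|[t2 _]]].
  - by move: t1; rewrite t0.
  - have [x2 hx2] := ne_E2 hE.
    exists [:: (1, x2)]; split; first by move=> q [<-|].
    split; first by move=> l hl' pl; exfalso; apply: nomask; exists l.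
    exists l1; split => //.
    have -> : term [:: (1, x2)] l1 = (fun x1 => lam l1 * V l1 x1).
      apply/funext => x1; rewrite /term e big_cons big_nil /= addr0 mul1r.
      by rewrite ind1 // mulr1.
    by apply: (cohS cD1) => //; have [] := hl l1 hl1.
  - by move: t1; rewrite t2.
case: (hF 0%N n0) => [[t0 _]|[[t1 _]|[_ gp]]].
- by exfalso; apply: nomask; exists 0%N; split => //; rewrite /p t0.
- by exfalso; apply: no1; exists 0%N.
case: gp => gf [f0 [[y1 y2] hy]].
exists [:: (1, y2)]; split; first by move=> q [<-|].
split; first by move=> l hl' pl; exfalso; apply: nomask; exists l.
exists 0%N; split => //.
have -> : term [:: (1, y2)] 0%N = (fun x1 => lam 0%N * fs 0%N (x1, y2)).
  by apply/funext => x1; rewrite /term big_cons big_nil /= addr0 mul1r.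
have l0 : 0 < lam 0%N by have [] := hl 0%N n0.
apply: (cohP cD1); split.
  by apply: gamble_scale; exact: gamble_sec.
split; first by move=> x1; apply: mulr_ge0; [apply: ltW|].
by exists y1; rewrite mulf_neq0 // gt_eqF.
Qed.

End Key.


Section Swap.
Variable R : realType.

Lemma posi_map (T T' : Type) (sg : T' -> T) (A : set (T -> R)) (A' : set (T' -> R)) g :
  (forall f, A f -> A' (fun y => f (sg y))) -> posi A g -> posi A' (fun y => g (sg y)).
Proof.
move=> hA [n [lam [fs [n0 [hl ->]]]]].
exists n, lam, (fun i y => fs i (sg y)); split => //; split => //.
by move=> i /hl [l0 Af]; split => //; apply: hA.
Qed.

Lemma gamble_comp (T T' : Type) (sg : T' -> T) (f : T -> R) :
  gamble f -> gamble (fun y => f (sg y)).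
Proof. by move=> [M hM]; exists M. Qed.

Variables T1 T2 : Type.
Variables (BB1 : set (set T1)) (BB2 : set (set T2)).

Lemma dprod_swap (D1 : set (T1 -> R)) (D2 : set (T2 -> R)) g :
  dprod BB1 BB2 D1 D2 g -> dprod BB2 BB1 D2 D1 (fun y => g (y.2, y.1)).
Proof.
apply: posi_map => f [[[f2 [B1 [Df2 [hB ->]]]]|[f1 [B2 [Df1 [hB ->]]]]]|gp].
- by left; right; exists f2, B1.
- by left; left; exists f1, B2.
- right; case: gp => gf [f0 [[x1 x2] hx]]; split; first exact: gamble_comp.
  by split => // ; exists (x2, x1).
Qed.

End Swap.

Section Prod.
Variable R : realType.
Variables T1 T2 : Type.
Hypothesis ne1 : exists x : T1, True.
Hypothesis ne2 : exists x : T2, True.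
Variables (BB1 : set (set T1)) (BB2 : set (set T2)).
Hypothesis hBB1 : forall B, BB1 B -> B !=set0.
Hypothesis hBB2 : forall B, BB2 B -> B !=set0.
Variables (D1 : set (T1 -> R)) (D2 : set (T2 -> R)).
Hypothesis cD1 : coherent_dg D1.
Hypothesis cD2 : coherent_dg D2.

Lemma keyK2 (k : T2 -> R) (B1 : set T1) (g : T1 * T2 -> R) :
  gamble k -> dprod BB1 BB2 D1 D2 g -> (forall x, g x <= k x.2 * ind R B1 x.1) -> D2 k.
Proof.
move=> gk Dg hg.
apply: (keyK ne2 ne1 hBB2 hBB1 cD2 cD1 gk (dprod_swap Dg)).
by move=> [x2 x1]; apply: (hg (x1, x2)).
Qed.

Lemma dprod_coh : coherent_dg (dprod BB1 BB2 D1 D2).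
Proof.
apply: natext_coh.
  move=> f [[f2 [B1 [Df2 [hB ->]]]]|[f1 [B2 [Df1 [hB ->]]]]].
  - apply: gamble_mul; first by apply: (gamble_comp snd); apply: (cohG cD2).
    by apply: (gamble_comp fst); exact: gamble_ind.
  - apply: gamble_mul; first by apply: (gamble_comp fst); apply: (cohG cD1).
    by apply: (gamble_comp snd); exact: gamble_ind.
move=> f Df fle.
have : D1 (fun _ => 0).
  apply: (keyK ne1 ne2 hBB1 hBB2 cD1 cD2 (B2 := setT) (@gamble_cst R T1 0) Df).
  by move=> x; rewrite mul0r.
exact: coh0.
Qed.

Lemma marg1 (k : T1 -> R) (B2 : set T2) : gamble k -> (BB2 B2 \/ B2 = setT) ->
  (dprod BB1 BB2 D1 D2 (fun x => k x.1 * ind R B2 x.2) <-> D1 k).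
Proof.
move=> gk hB; split.
  by move=> Dg; apply: (keyK ne1 ne2 hBB1 hBB2 cD1 cD2 gk Dg).
by move=> Dk; apply: natext_in; right; exists k, B2.
Qed.

Lemma marg2 (k : T2 -> R) (B1 : set T1) : gamble k -> (BB1 B1 \/ B1 = setT) ->
  (dprod BB1 BB2 D1 D2 (fun x => k x.2 * ind R B1 x.1) <-> D2 k).
Proof.
move=> gk hB; split.
  by move=> Dg; apply: (keyK2 gk Dg).
by move=> Dk; apply: natext_in; left; exists k, B1.
Qed.

End Prod.


Section Cyl.
Variable R : realType.
Variables T1 T2 : Type.

Lemma ind_cyl1s (B : set T1) (x : T1 * T2) : ind R (@cyl1s T1 T2 B) x = ind R B x.1.
Proof. by rewrite !indE. Qed.

Lemma ind_cyl2s (B : set T2) (x : T1 * T2) : ind R (@cyl2s T1 T2 B) x = ind R B x.2.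
Proof. by rewrite !indE. Qed.

Lemma cyl2sT : @cyl2s T1 T2 setT = setT.
Proof. by apply/seteqP; split. Qed.
Lemma cyl1sT : @cyl1s T1 T2 setT = setT.
Proof. by apply/seteqP; split. Qed.

End Cyl.

Lemma lpr_iff (R : realType) (T T' : Type) (D : set (T -> R)) (D' : set (T' -> R)) p p' :
  (forall mu, D (fun x => (p.1 x - mu) * ind R p.2 x) <-> D' (fun x => (p'.1 x - mu) * ind R p'.2 x)) ->
  lpr D p = lpr D' p'.
Proof.
move=> h; rewrite /lpr; congr (ereal_sup (_ @` _)).
by apply/seteqP; split => mu /= /h.
Qed.

Unset Implicit Arguments.

Theorem theorem19 (R : realType) (T1 T2 : Type)
  (ne1 : exists x : T1, True) (ne2 : exists x : T2, True)
  (BB1 : set (set T1)) (BB2 : set (set T2))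
  (hBB1 : forall B, BB1 B -> B !=set0) (hBB2 : forall B, BB2 B -> B !=set0)
  (C1 : set ((T1 -> R) * set T1)) (C2 : set ((T2 -> R) * set T2))
  (hC1 : C1 `<=` @cond_domain R T1) (hC2 : C2 `<=` @cond_domain R T2)
  (P1 : (T1 -> R) * set T1 -> \bar R) (P2 : (T2 -> R) * set T2 -> \bar R)
  (hP1 : coherent_lpr C1 P1) (hP2 : coherent_lpr C2 P2)
  (C : set ((T1 * T2 -> R) * set (T1 * T2)))
  (hC : C `<=` @cond_domain R (T1 * T2))
  (hCind : indep_domain BB1 BB2 C)
  (hC1C : forall p, C1 p -> C (@cyl1 R T1 T2 p.1, @cyl1s T1 T2 p.2))
  (hC2C : forall p, C2 p -> C (@cyl2 R T1 T2 p.1, @cyl2s T1 T2 p.2)) :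
  let Pprod := lpr (dprod BB1 BB2 (E_lpr C1 P1) (E_lpr C2 P2)) in
  indep_natext BB1 BB2 C1 C2 P1 P2 C Pprod /\
  (forall Q, indep_natext BB1 BB2 C1 C2 P1 P2 C Q ->
     forall p, C p -> Q p = Pprod p).
Proof.
move=> Pprod; rewrite {}/Pprod.
set D1 := E_lpr C1 P1; set D2 := E_lpr C2 P2; set D := dprod BB1 BB2 D1 D2.
have cD1 : coherent_dg D1 := E_coh hC1 hP1.
have cD2 : coherent_dg D2 := E_coh hC2 hP2.
have cD : coherent_dg D := dprod_coh ne1 ne2 hBB1 hBB2 cD1 cD2.
have gam1 : forall (f1 : T1 -> R) B, C (@cyl1 R T1 T2 f1, B) -> gamble f1.
  move=> f1 B /hC [[M hM] _]; case: ne2 => x2 _; exists M => x1; exact: (hM (x1, x2)).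
have gam2 : forall (f2 : T2 -> R) B, C (@cyl2 R T1 T2 f2, B) -> gamble f2.
  move=> f2 B /hC [[M hM] _]; case: ne1 => x1 _; exists M => x2; exact: (hM (x1, x2)).
have L1 : forall f1 B1 B2, gamble f1 -> (BB2 B2 \/ B2 = setT) ->
    lpr D (@cyl1 R T1 T2 f1, @cyl1s T1 T2 B1 `&` @cyl2s T1 T2 B2) = lpr D1 (f1, B1).
  move=> f1 B1 B2 gf hB; apply: lpr_iff => mu /=.
  have -> : (fun x => (@cyl1 R T1 T2 f1 x - mu) * ind R (@cyl1s T1 T2 B1 `&` @cyl2s T1 T2 B2) x) =
      (fun x => (fun x1 => (f1 x1 - mu) * ind R B1 x1) x.1 * ind R B2 x.2).
    by apply/funext => x; rewrite indI ind_cyl1s ind_cyl2s mulrA.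
  apply: (marg1 ne1 ne2 hBB1 hBB2 cD1 cD2) => //.
  apply: gamble_mul; last exact: gamble_ind.
  by apply: gamble_add => //; exact: gamble_cst.
have L1' : forall f1 B1, gamble f1 -> lpr D (@cyl1 R T1 T2 f1, @cyl1s T1 T2 B1) = lpr D1 (f1, B1).
  by move=> f1 B1 gf; rewrite -(L1 f1 B1 setT) ?cyl2sT ?setIT //; right.
have L2 : forall f2 B2 B1, gamble f2 -> (BB1 B1 \/ B1 = setT) ->
    lpr D (@cyl2 R T1 T2 f2, @cyl2s T1 T2 B2 `&` @cyl1s T1 T2 B1) = lpr D2 (f2, B2).
  move=> f2 B2 B1 gf hB; apply: lpr_iff => mu /=.
  have -> : (fun x => (@cyl2 R T1 T2 f2 x - mu) * ind R (@cyl2s T1 T2 B2 `&` @cyl1s T1 T2 B1) x) =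
      (fun x => (fun x2 => (f2 x2 - mu) * ind R B2 x2) x.2 * ind R B1 x.1).
    by apply/funext => x; rewrite indI ind_cyl1s ind_cyl2s mulrA.
  apply: (marg2 ne1 ne2 hBB1 hBB2 cD1 cD2) => //.
  apply: gamble_mul; last exact: gamble_ind.
  by apply: gamble_add => //; exact: gamble_cst.
have L2' : forall f2 B2, gamble f2 -> lpr D (@cyl2 R T1 T2 f2, @cyl2s T1 T2 B2) = lpr D2 (f2, B2).
  by move=> f2 B2 gf; rewrite -(L2 f2 B2 setT) ?cyl1sT ?setIT //; right.
have IP : indep_product BB1 BB2 C1 C2 P1 P2 C (lpr D).
  split; first split.
  - by exists D; split.
  split.
  - move=> f1 B1 B2 Cf hB; have gf := gam1 _ _ Cf; rewrite L1' // L1 //; by left.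
  - move=> f2 B2 B1 Cf hB; have gf := gam2 _ _ Cf; rewrite L2' // L2 //; by left.
  split.
  - move=> [f B] CfB /=; rewrite L1' ?(lpr_E hC1 hP1) //.
    by have [] := hC1 _ CfB.
  - move=> [f B] CfB /=; rewrite L2' ?(lpr_E hC2 hP2) //.
    by have [] := hC2 _ CfB.
have MIN : forall P, indep_product BB1 BB2 C1 C2 P1 P2 C P ->
    forall p, C p -> (lpr D p <= P p)%E.
  move=> P [[[Dw [cDw hPw]] [EP1 EP2]] [PC1 PC2]] p Cp.
  rewrite hPw //; apply: lpr_le; apply: (natext_sub cDw).
  have hAP : A_lpr C P `<=` Dw := AP_sub cDw hC hPw.
  move=> f [[f2 [B1 [Df2 [hB ->]]]]|[f1 [B2 [Df1 [hB ->]]]]].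
  - case: Df2 => n [lam [hs [n0 [hl ->]]]].
    have key : forall h, (A_lpr C2 P2 h \/ gamble_pos h) -> Dw (fun x => h x.2 * ind R B1 x.1).
      move=> h [[g [E [mu [CgE [muP ->]]]]]|[gh [h0 [x2 hx2]]]].
      + have CgE' : C (@cyl2 R T1 T2 g, @cyl2s T1 T2 E) := hC2C _ CgE.
        case: hB => [hB|->].
        * apply: hAP; exists (@cyl2 R T1 T2 g), (@cyl2s T1 T2 E `&` @cyl1s T1 T2 B1), mu; split.
            exact: ((hCind.2 g E B1 (hC2 _ CgE) hB).1 CgE').
          split; first by rewrite -(EP2 g E B1 CgE' hB) (PC2 (g, E) CgE).
          by apply/funext => x; rewrite indI ind_cyl2s ind_cyl1s mulrA.
        * apply: hAP; exists (@cyl2 R T1 T2 g), (@cyl2s T1 T2 E), mu; split => //.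
          split; first by rewrite (PC2 (g, E) CgE).
          by apply/funext => x; rewrite indT mulr1 ind_cyl2s.
      + have [b1 hb1] : B1 !=set0.
          by case: hB => [/hBB1 //|->]; case: ne1 => b _; exists b.
        apply: (cohP cDw); split.
          apply: gamble_mul; first exact: (gamble_comp snd gh).
          by apply: (gamble_comp fst); exact: gamble_ind.
        split; first by move=> x; apply: mulr_ge0 => //; exact: ind_ge0.
        by exists (b1, x2); rewrite /= ind1 // mulr1.
    have : posi Dw (fun x => \sum_(i < n) lam i * (hs i x.2 * ind R B1 x.1)).
      exists n, lam, (fun i x => hs i x.2 * ind R B1 x.1); split => //; split => //.
      by move=> i hi; have [l0 hh] := hl i hi; split => //; apply: key.
    move=> /(posi_sub cDw (fun _ h => h)).
    have -> // : (fun x => \sum_(i < n) lam i * (hs i x.2 * ind R B1 x.1)) =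
       (fun x => (\sum_(i < n) lam i * hs i x.2) * ind R B1 x.1).
    by apply/funext => x; rewrite mulr_suml; apply: eq_bigr => i _; rewrite mulrA.
  - case: Df1 => n [lam [hs [n0 [hl ->]]]].
    have key : forall h, (A_lpr C1 P1 h \/ gamble_pos h) -> Dw (fun x => h x.1 * ind R B2 x.2).
      move=> h [[g [E [mu [CgE [muP ->]]]]]|[gh [h0 [x1 hx1]]]].
      + have CgE' : C (@cyl1 R T1 T2 g, @cyl1s T1 T2 E) := hC1C _ CgE.
        case: hB => [hB|->].
        * apply: hAP; exists (@cyl1 R T1 T2 g), (@cyl1s T1 T2 E `&` @cyl2s T1 T2 B2), mu; split.
            exact: ((hCind.1 g E B2 (hC1 _ CgE) hB).1 CgE').
          split; first by rewrite -(EP1 g E B2 CgE' hB) (PC1 (g, E) CgE).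
          by apply/funext => x; rewrite indI ind_cyl2s ind_cyl1s mulrA.
        * apply: hAP; exists (@cyl1 R T1 T2 g), (@cyl1s T1 T2 E), mu; split => //.
          split; first by rewrite (PC1 (g, E) CgE).
          by apply/funext => x; rewrite indT mulr1 ind_cyl1s.
      + have [b2 hb2] : B2 !=set0.
          by case: hB => [/hBB2 //|->]; case: ne2 => b _; exists b.
        apply: (cohP cDw); split.
          apply: gamble_mul; first exact: (gamble_comp fst gh).
          by apply: (gamble_comp snd); exact: gamble_ind.
        split; first by move=> x; apply: mulr_ge0 => //; exact: ind_ge0.
        by exists (x1, b2); rewrite /= ind1 // mulr1.
    have : posi Dw (fun x => \sum_(i < n) lam i * (hs i x.1 * ind R B2 x.2)).
      exists n, lam, (fun i x => hs i x.1 * ind R B2 x.2); split => //; split => //.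
      by move=> i hi; have [l0 hh] := hl i hi; split => //; apply: key.
    move=> /(posi_sub cDw (fun _ h => h)).
    have -> // : (fun x => \sum_(i < n) lam i * (hs i x.1 * ind R B2 x.2)) =
       (fun x => (\sum_(i < n) lam i * hs i x.1) * ind R B2 x.2).
    by apply/funext => x; rewrite mulr_suml; apply: eq_bigr => i _; rewrite mulrA.
split; first by split.
move=> Q [QIP Qmin] p Cp; apply/eqP; rewrite eq_le; apply/andP; split.
  exact: Qmin.
exact: MIN.
Qed.
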